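(* Let $R$ be a commutative Noetherian domain which is an algebra over an uncountable field but is not itself a field. Suppose there is a countable multiplicatively closed subset $\mathcal A\subseteq R\setminus\{0\}$ such that $R\mathcal A^{-1}$ is the quotient field of $R$. Then $R$ has Krull dimension $1$ and $\mathrm{Spec}(R)$ is countable. *)

(* Defs.v *)
From HB Require Import structures.
From mathcomp Require Import all_boot all_order all_algebra.
Set Implicit Arguments. Unset Strict Implicit. Unset Printing Implicit Defensive.
Import Order.TTheory GRing.Theory Num.Theory.
Local Open Scope ring_scope.

(* Subsets of R are Prop-valued predicates (ideals need not be decidable). *)

Definition uncountable (T : Type) : Prop :=
  ~ exists f : nat -> T, forall x : T, exists n, f n = x.

Definition countable_subset (R : Type) (A : R -> Prop) : Prop :=
  exists f : nat -> R, forall x, A x -> exists n, f n = x.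

Definition is_ideal (R : comNzRingType) (I : R -> Prop) : Prop :=
  [/\ I 0, (forall x y, I x -> I y -> I (x + y)) & (forall r x, I x -> I (r * x))].

Definition is_prime_ideal (R : comNzRingType) (P : R -> Prop) : Prop :=
  [/\ is_ideal P, ~ P 1 & (forall x y, P (x * y) -> P x \/ P y)].

Definition noetherian (R : comNzRingType) : Prop :=
  forall I : nat -> (R -> Prop),
    (forall n, is_ideal (I n)) ->
    (forall n x, I n x -> I n.+1 x) ->
    exists N, forall n, (N <= n)%N -> forall x, I n x -> I N x.

Definition strict_subset (R : Type) (P Q : R -> Prop) : Prop :=
  (forall x, P x -> Q x) /\ exists x, Q x /\ ~ P x.

Definition prime_chain (R : comNzRingType) (n : nat) (c : nat -> (R -> Prop)) : Prop :=
  (forall i, (i <= n)%N -> is_prime_ideal (c i)) /\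
  (forall i, (i < n)%N -> strict_subset (c i) (c i.+1)).

Definition krull_dim_eq (R : comNzRingType) (d : nat) : Prop :=
  (exists c, @prime_chain R d c) /\
  (forall m c, @prime_chain R m c -> (m <= d)%N).

Definition spec_countable (R : comNzRingType) : Prop :=
  exists f : nat -> (R -> Prop),
    forall P, is_prime_ideal P -> exists n, forall x, P x <-> f n x.

Definition mult_closed (R : comNzRingType) (A : R -> Prop) : Prop :=
  A 1 /\ forall x y, A x -> A y -> A (x * y).

Definition localization_is_fraction_field (R : idomainType) (A : R -> Prop) : Prop :=
  forall z : {fraction R}, exists a s : R,
    A s /\ z = (@FracField.tofrac R a) / (@FracField.tofrac R s).

Definition is_field_ring (R : idomainType) : Prop :=
  forall x : R, x != 0 -> x \is a GRing.unit.

(* Main.v *)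
Require Import Defs.
From HB Require Import structures.
From mathcomp Require Import all_boot all_order all_algebra.
From mathcomp Require Import ring.
From Stdlib Require Import Classical ClassicalEpsilon.
Import GRing.Theory.
Set Implicit Arguments. Unset Strict Implicit. Unset Printing Implicit Defensive.
Local Open Scope ring_scope.

Definition subI (R : Type) (I J : R -> Prop) := forall r, I r -> J r.


Lemma id0 (R : comNzRingType) (I : R -> Prop) : is_ideal I -> I 0.
Proof. by case. Qed.
Lemma idD (R : comNzRingType) (I : R -> Prop) x y : is_ideal I -> I x -> I y -> I (x + y).
Proof. by case=> _ h _; apply: h. Qed.
Lemma idM (R : comNzRingType) (I : R -> Prop) r x : is_ideal I -> I x -> I (r * x).
Proof. by case=> _ _ h; apply: h. Qed.
Lemma idMr (R : comNzRingType) (I : R -> Prop) r x : is_ideal I -> I x -> I (x * r).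
Proof. by move=> hI hx; rewrite mulrC; apply: idM. Qed.
Lemma idN (R : comNzRingType) (I : R -> Prop) x : is_ideal I -> I x -> I (- x).
Proof. by move=> hI hx; rewrite -mulN1r; apply: idM. Qed.
Lemma idB (R : comNzRingType) (I : R -> Prop) x y : is_ideal I -> I x -> I y -> I (x - y).
Proof. by move=> hI hx hy; apply: idD => //; apply: idN. Qed.
Lemma idsum (R : comNzRingType) (I : R -> Prop) n (F : 'I_n -> R) :
  is_ideal I -> (forall i, I (F i)) -> I (\sum_(i < n) F i).
Proof.
move=> hI hF; elim/big_ind: _ => //; first exact: id0.
by move=> x y; apply: idD.
Qed.

Lemma prime_prod (R : comNzRingType) (P : R -> Prop) n (a : nat -> R) :
  is_prime_ideal P -> P (\prod_(i < n) a i) -> exists2 i, (i < n)%N & P (a i).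
Proof.
case=> hI h1 hp; elim: n => [|n IH]; first by rewrite big_ord0.
rewrite big_ord_recr /= => /hp [/IH [i hi hPi]|hn].
  by exists i => //; apply: ltnW.
by exists n.
Qed.

Lemma prime_pow (R : comNzRingType) (P : R -> Prop) n (a : R) :
  is_prime_ideal P -> P (a ^+ n) -> P a.
Proof.
case=> hI h1 hp; elim: n => [|n IH]; first by rewrite expr0.
by rewrite exprS => /hp [].
Qed.

Lemma max_principle (R : comNzRingType) (S : (R -> Prop) -> Prop) :
  noetherian R -> (forall I, S I -> is_ideal I) -> (exists I, S I) ->
  exists I, S I /\ forall J, S J -> subI I J -> subI J I.
Proof.
move=> hN hS [I0 hI0].
apply: NNPP => hno.
have step : forall X : sig S, exists Y : sig S,
    subI (sval X) (sval Y) /\ exists x, sval Y x /\ ~ sval X x.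
  move=> [I hI] /=; apply: NNPP => h; apply: hno; exists I; split => // J hJ hIJ x hJx.
  apply: NNPP => hx; apply: h; exists (exist _ J hJ) => /=; split => //.
  by exists x.
pose nxt I := sval (constructive_indefinite_description _ (step I)).
have hnxt I : subI (sval I) (sval (nxt I)) /\ exists x, sval (nxt I) x /\ ~ sval I x.
  exact: (svalP (constructive_indefinite_description _ (step I))).
pose c n := sval (iter n nxt (exist _ I0 hI0)).
have [N hNc] := hN c (fun n => hS _ (svalP _)) (fun n => (hnxt _).1).
have [x [h1 h2]] := (hnxt (iter N nxt (exist _ I0 hI0))).2.
by apply: h2; apply: (hNc N.+1).
Qed.

Definition L1prop (R : comNzRingType) (I : R -> Prop) :=
  exists (n : nat) (C : nat -> R -> Prop),
    (forall i, (i < n)%N -> is_prime_ideal (C i) /\ subI I (C i)) /\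
    (forall a : nat -> R, (forall i, (i < n)%N -> C i (a i)) -> I (\prod_(i < n) a i)).

Definition addx (R : comNzRingType) (J : R -> Prop) (x : R) :=
  fun r => exists j c, J j /\ r = j + c * x.

Lemma addx_ideal (R : comNzRingType) (J : R -> Prop) x : is_ideal J -> is_ideal (addx J x).
Proof.
move=> hJ; split.
- by exists 0, 0; split; [exact: id0|rewrite mul0r addr0].
- move=> a b [j1 [c1 [h1 ->]]] [j2 [c2 [h2 ->]]].
  exists (j1 + j2), (c1 + c2); split; first exact: idD.
  ring.
- move=> r a [j1 [c1 [h1 ->]]]; exists (r * j1), (r * c1); split; first exact: idM.
  ring.
Qed.

Lemma L1 (R : comNzRingType) (I : R -> Prop) : noetherian R -> is_ideal I -> L1prop I.
Proof.
move=> hN hI; apply: NNPP => hbad.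
have [J [[hJ hJb] hmax]] := max_principle (S := fun J => is_ideal J /\ ~ L1prop J) hN
   (fun J h => h.1) (ex_intro _ I (conj hI hbad)).
apply: hJb.
case: (classic (J 1)) => [hJ1|hJ1].
  exists 0%N, (fun _ => J); split => // a _; by rewrite big_ord0.
case: (classic (forall x y, J (x * y) -> J x \/ J y)) => [hpr|hnp].
  exists 1%N, (fun _ => J); split.
    by move=> i _; split => //; split.
  by move=> a ha; rewrite big_ord1; apply: ha.
have [x hx] := not_all_ex_not _ _ hnp.
have [y hy] := not_all_ex_not _ _ hx.
have [hxy hxy'] := imply_to_and _ _ hy.
have [hnx hny] := not_or_and _ _ hxy'.
have good z : ~ J z -> L1prop (addx J z).
  move=> hz; apply: NNPP => hb.
  have hsub : subI J (addx J z).
    by move=> r hr; exists r, 0; split => //; rewrite mul0r addr0.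
  apply: hz; apply: (hmax _ (conj (addx_ideal z hJ) hb) hsub z).
  by exists 0, 1; split; [exact: id0| rewrite add0r mul1r].
have [n1 [C1 [hC1 hP1]]] := good x hnx.
have [n2 [C2 [hC2 hP2]]] := good y hny.
exists (n1 + n2)%N, (fun i => if (i < n1)%N then C1 i else C2 (i - n1)%N); split.
  move=> i hi; case: ifP => hin.
    have [h1 h2] := hC1 i hin; split => // r hr; apply: h2; exists r, 0; split=> //.
    by rewrite mul0r addr0.
  have hi2 : (i - n1 < n2)%N by rewrite ltn_subLR // leqNgt hin.
  have [h1 h2] := hC2 _ hi2; split => // r hr; apply: h2; exists r, 0; split=> //.
  by rewrite mul0r addr0.
move=> a ha.
rewrite big_split_ord /=.
have ha1 : forall i, (i < n1)%N -> C1 i (a i).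
  by move=> i hi; have := ha i (ltn_addr n2 hi); rewrite hi.
have ha2 : forall i, (i < n2)%N -> C2 i (a (n1 + i)%N).
  move=> i hi; have := ha (n1 + i)%N; rewrite ltn_add2l (ltnNge (n1 + i) n1) leq_addr /= addKn.
  by apply.
have [j1 [c1 [hj1 e1]]] := hP1 a ha1.
have [j2 [c2 [hj2 e2]]] := hP2 (fun i => a (n1 + i)%N) ha2.
have -> : \prod_(i < n1) a (lshift n2 i) = \prod_(i < n1) a i by [].
have -> : \prod_(i < n2) a (rshift n1 i) = \prod_(i < n2) a (n1 + i)%N by [].
rewrite e1 e2.
have -> : (j1 + c1 * x) * (j2 + c2 * y) =
  (j2 + c2 * y) * j1 + (c1 * x) * j2 + (c1 * c2) * (x * y) by ring.
apply: idD => //; last exact: idM.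
by apply: idD => //; apply: idM.
Qed.

Lemma L1_cover (R : comNzRingType) (I : R -> Prop) n (C : nat -> R -> Prop) :
  (forall a : nat -> R, (forall i, (i < n)%N -> C i (a i)) -> I (\prod_(i < n) a i)) ->
  forall G, is_prime_ideal G -> subI I G -> exists2 i, (i < n)%N & subI (C i) G.
Proof.
move=> hP G hG hIG; apply: NNPP => hno.
have h i : exists a, (i < n)%N -> C i a /\ ~ G a.
  case: (ltnP i n) => hi; last by exists 0.
  apply: NNPP => hh; apply: hno; exists i => // r hr; apply: NNPP => hGr.
  by apply: hh; exists r.
pose a i := sval (constructive_indefinite_description _ (h i)).
have ha i : (i < n)%N -> C i (a i) /\ ~ G (a i).
  exact: (svalP (constructive_indefinite_description _ (h i))).
have [i hi] := prime_prod hG (hIG _ (hP a (fun i hi => (ha i hi).1))).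
by apply: (ha i hi).2.
Qed.

Definition sat (R : comNzRingType) (M I : R -> Prop) := fun r => exists u, ~ M u /\ I (u * r).
Definition satd (R : comNzRingType) (M I : R -> Prop) := forall u r, ~ M u -> I (u * r) -> I r.
Definition addI (R : comNzRingType) (I J : R -> Prop) :=
  fun r => exists a b, I a /\ J b /\ r = a + b.
Definition zeroI (R : comNzRingType) := fun r : R => r = 0.
Definition minimal_over (R : comNzRingType) (M : R -> Prop) x :=
  is_prime_ideal M /\ M x /\ forall G, is_prime_ideal G -> G x -> subI G M -> subI M G.

Lemma prime_nM (R : comNzRingType) (M : R -> Prop) u v :
  is_prime_ideal M -> ~ M u -> ~ M v -> ~ M (u * v).
Proof. by case=> _ _ h hu hv /h []. Qed.

Lemma zeroI_ideal (R : comNzRingType) : is_ideal (@zeroI R).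
Proof.
split; rewrite /zeroI //; first by move=> x y -> ->; rewrite addr0.
by move=> r x ->; rewrite mulr0.
Qed.

Lemma sat_ideal (R : comNzRingType) (M I : R -> Prop) :
  is_prime_ideal M -> is_ideal I -> is_ideal (sat M I).
Proof.
move=> hM hI; have [_ hM1 _] := hM; split.
- by exists 1; split => //; rewrite mulr0; exact: id0.
- move=> a b [u [hu ha]] [v [hv hb]]; exists (u * v); split; first exact: prime_nM.
  have -> : u * v * (a + b) = v * (u * a) + u * (v * b) by ring.
  by apply: idD => //; apply: idM.
- move=> r a [u [hu ha]]; exists u; split => //.
  have -> : u * (r * a) = r * (u * a) by ring.
  exact: idM.
Qed.

Lemma sat_satd (R : comNzRingType) (M I : R -> Prop) : is_prime_ideal M -> satd M (sat M I).
Proof.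
move=> hM u r hu [v [hv h]]; exists (v * u); split; first exact: prime_nM.
by rewrite -mulrA.
Qed.

Lemma sat_incl (R : comNzRingType) (M I : R -> Prop) : is_prime_ideal M -> subI I (sat M I).
Proof. by case=> _ h1 _ r hr; exists 1; rewrite mul1r. Qed.

Lemma satd_sat (R : comNzRingType) (M I : R -> Prop) : satd M I -> subI (sat M I) I.
Proof. by move=> h r [u [hu hr]]; apply: h hr. Qed.

Lemma sat_mono (R : comNzRingType) (M I J : R -> Prop) : subI I J -> subI (sat M I) (sat M J).
Proof. by move=> h r [u [hu hr]]; exists u; split => //; apply: h. Qed.

Lemma addI_ideal (R : comNzRingType) (I J : R -> Prop) :
  is_ideal I -> is_ideal J -> is_ideal (addI I J).
Proof.
move=> hI hJ; split.
- by exists 0, 0; split; [exact: id0 | split; [exact: id0 | rewrite addr0]].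
- move=> a b [a1 [a2 [h1 [h2 ->]]]] [b1 [b2 [h3 [h4 ->]]]].
  exists (a1 + b1), (a2 + b2); split; first exact: idD.
  by split; [exact: idD | ring].
- move=> r a [a1 [a2 [h1 [h2 ->]]]]; exists (r * a1), (r * a2).
  by split; [exact: idM | split; [exact: idM| ring]].
Qed.

Definition chain_over (R : comNzRingType) (M J : R -> Prop) (G : nat -> R -> Prop) :=
  [/\ (forall n, is_ideal (G n)), (forall n, satd M (G n)),
      (forall n, subI (G n.+1) (G n)) & (forall n, subI J (G n))].

Definition Good (R : comNzRingType) (M J : R -> Prop) :=
  forall G, chain_over M J G -> forall N0, exists2 N, (N0 <= N)%N & subI (G N) (G N.+1).

Lemma chain_desc (R : comNzRingType) (G : nat -> R -> Prop) :
  (forall n, subI (G n.+1) (G n)) -> forall m n, (m <= n)%N -> subI (G n) (G m).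
Proof.
move=> h m n /subnK <-; elim: (n - m)%N => [|k IH] r //=.
by rewrite addSn => /h /IH.
Qed.

Lemma dcc (R : comNzRingType) (M : R -> Prop) x : noetherian R -> minimal_over M x ->
  forall J, is_ideal J -> satd M J -> J x -> Good M J.
Proof.
move=> hN [hM [hMx hmin]] J0 hJ0 hJ0s hJ0x; apply: NNPP => hbad0.
have [J [[hJ [hJs [hJx hJb]]] hmax]] := max_principle
   (S := fun J => is_ideal J /\ satd M J /\ J x /\ ~ Good M J) hN
   (fun J h => h.1) (ex_intro _ J0 (conj hJ0 (conj hJ0s (conj hJ0x hbad0)))).
have [_ hM1 hMp] := hM.
apply: hJb.
case: (classic (J 1)) => [hJ1|hJ1].
  move=> G [hGi hGs hGd hGJ] N0; exists N0 => // r _.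
  by rewrite -[r]mulr1; apply: idM; [exact: hGi | exact: hGJ].
have [K [[a [ha hKa]] hKmax]] := max_principle
   (S := fun K => exists b, ~ J b /\ (forall r, K r <-> J (r * b))) hN
   (fun K => fun '(ex_intro b (conj hb hK)) =>
      let hK' := hK in
      ltac:(split;
        [ by apply/hK'; rewrite mul0r; exact: id0
        | by move=> u v /hK' hu /hK' hv; apply/hK'; rewrite mulrDl; exact: idD
        | by move=> r u /hK' hu; apply/hK'; rewrite -mulrA; exact: idM ]))
   (ex_intro _ (fun r => J (r * 1)) (ex_intro _ 1 (conj (fun h => hJ1 h) (fun r => iff_refl _)))).
have hKid : is_ideal K.
  split.
  - by apply/hKa; rewrite mul0r; exact: id0.
  - by move=> u v /hKa hu /hKa hv; apply/hKa; rewrite mulrDl; exact: idD.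
  - by move=> r u /hKa hu; apply/hKa; rewrite -mulrA; exact: idM.
have hKpr : is_prime_ideal K.
  split => //; first by move/hKa; rewrite mul1r.
  move=> r s /hKa hrs; case: (classic (K r)) => [hr|hr]; [by left|right].
  have hK' : subI K (fun t => J (t * (r * a))).
    move=> t /hKa ht; rewrite mulrA [t * r]mulrC -mulrA; exact: idM.
  apply: (hKmax _ _ hK').
    exists (r * a); split => // hra; apply: hr; apply/hKa; exact: hra.
  by rewrite /= mulrA [s * r]mulrC.
have hKM : subI K M.
  move=> t /hKa ht; apply: NNPP => hMt; apply: ha; exact: hJs ht.
have hMK : subI M K := hmin K hKpr (proj2 (hKa x) (idMr a hJ hJx)) hKM.
pose J' := sat M (addx J a).
have hJ'id : is_ideal J' by apply: sat_ideal => //; apply: addx_ideal.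
have hJ'a : J' a.
  by exists 1; split => //; exists 0, 1; split; [exact: id0 | rewrite add0r].
have hJJ' : subI J J'.
  by move=> r hr; exists 1; split => //; exists r, 0; split => //; rewrite mul1r mul0r addr0.
have hgood : Good M J'.
  apply: NNPP => hb; apply: ha; apply: (hmax J' _ hJJ' a hJ'a).
  split => //; split; first exact: sat_satd.
  by split => //; apply: hJJ'.
move=> G [hGi hGs hGd hGJ] N0.
case: (classic (forall n, G n a)) => [hall|].
  apply: hgood; split => // n r [u [hu [j [c [hj e]]]]]; apply: (hGs n u) => //.
  by rewrite e; apply: idD; [exact: hGi | exact: (hGJ n j hj) | apply: idM].

move=> /not_all_ex_not [n1 hn1].
pose H n := sat M (addx (G n) a).
have hH : chain_over M J' H.
  split.
  - by move=> n; apply: sat_ideal => //; apply: addx_ideal.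
  - by move=> n; apply: sat_satd.
  - move=> n r [u [hu [g [c [hg e]]]]]; exists u; split => //; exists g, c; split => //.
    exact: hGd.
  - move=> n r [u [hu [j [c [hj e]]]]]; exists u; split => //; exists j, c; split => //.
    exact: hGJ.
have [N hN0 hHN] := hgood H hH (maxn N0 n1).
exists N; first by apply: leq_trans hN0; apply: leq_maxl.
move=> r hr.
have : H N r.
  by exists 1; split => //; exists r, 0; split => //; rewrite mul1r mul0r addr0.
move=> /hHN [u [hu [g [c [hg e]]]]].
apply: (hGs N.+1 u) => //; rewrite e.
case: (classic (M c)) => [hc|hc].
  by apply: idD => //; apply: hGJ; apply/hKa; apply: hMK.
exfalso; apply: hn1.
apply: (chain_desc hGd (m := n1) (n := N)); first by apply: leq_trans hN0; apply: leq_maxr.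
apply: (hGs N c) => //.
have -> : c * a = u * r - g by rewrite e; ring.
apply: idB => //; first by apply: idM.
exact: hGd.
Qed.

Definition span (R : comNzRingType) (a : nat -> R) n :=
  fun r => exists c : nat -> R, r = \sum_(i < n) c i * a i.

Lemma span_ideal (R : comNzRingType) (a : nat -> R) n : is_ideal (span a n).
Proof.
split.
- by exists (fun _ => 0); rewrite big1 // => i _; rewrite mul0r.
- move=> x y [c1 ->] [c2 ->]; exists (fun i => c1 i + c2 i).
  by rewrite -big_split /=; apply: eq_bigr => i _; rewrite mulrDl.
- move=> r x [c ->]; exists (fun i => r * c i).
  by rewrite mulr_sumr; apply: eq_bigr => i _; rewrite mulrA.
Qed.

Lemma span_in (R : comNzRingType) (I : R -> Prop) (a : nat -> R) n :
  is_ideal I -> (forall i, (i < n)%N -> I (a i)) -> subI (span a n) I.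
Proof.
move=> hI ha r [c ->]; apply: idsum => // i; apply: idM => //; exact: ha.
Qed.

Lemma span_mem (R : comNzRingType) (a : nat -> R) n i : (i < n)%N -> span a n (a i).
Proof.
move=> hi; exists (fun j => if j == i then 1 else 0).
rewrite (bigD1 (Ordinal hi)) //= eqxx mul1r big1 ?addr0 // => j hj.
by rewrite ifN ?mul0r //; apply: contra hj => /eqP e; apply/eqP/val_inj.
Qed.

Lemma fg (R : comNzRingType) (I : R -> Prop) : noetherian R -> is_ideal I ->
  exists n (a : nat -> R), (forall i, (i < n)%N -> I (a i)) /\ subI I (span a n).
Proof.
move=> hN hI.
have hne : exists J, exists n (a : nat -> R), (forall i, (i < n)%N -> I (a i)) /\
                                          (forall r, J r <-> span a n r).
  by exists (span (fun _ => 0) 0), 0%N, (fun _ => 0); split.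
have [J [[n [a [ha hJ]]] hmax]] := max_principle
   (S := fun J => exists n (a : nat -> R), (forall i, (i < n)%N -> I (a i)) /\
                                          (forall r, J r <-> span a n r)) hN
   (fun J '(ex_intro n (ex_intro a (conj _ hJ))) =>
      let h := span_ideal a n in
      ltac:(case: h => h1 h2 h3; split;
       [ by apply/hJ | by move=> x y /hJ hx /hJ hy; apply/hJ; apply: h2
       | by move=> r x /hJ hx; apply/hJ; apply: h3]))
   hne.
exists n, a; split => // y hy; apply: NNPP => hny.
pose a' i := if i == n then y else a i.
have hsub : subI J (span a' n.+1).
  move=> r /hJ [c ->]; exists (fun i => if i == n then 0 else c i).
  rewrite big_ord_recr /= eqxx mul0r addr0; apply: eq_bigr => i _.
  by rewrite /a' (ltn_eqF (ltn_ord i)).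
have hS : exists n0 (a0 : nat -> R), (forall i, (i < n0)%N -> I (a0 i)) /\
                                   (forall r, span a' n.+1 r <-> span a0 n0 r).
  exists n.+1, a'; split => // i; rewrite ltnS leq_eqVlt /a' => /orP [/eqP ->|hi].
    by rewrite eqxx.
  by rewrite (ltn_eqF hi); apply: ha.
apply: hny; apply/hJ; apply: (hmax _ hS hsub).
have := span_mem a' (ltnSn n); by rewrite /a' eqxx.
Qed.

Definition xmul (R : comNzRingType) (x : R) (E : R -> Prop) := fun r => exists s, E s /\ r = x * s.

Lemma naka_step (R : comNzRingType) (M E E' : R -> Prop) x (a : nat -> R) i :
  is_prime_ideal M -> M x -> is_ideal E -> is_ideal E' -> E (a i) ->
  subI E (sat M (addI E' (span a i.+1))) ->
  subI E (sat M (addI E' (xmul x E))) ->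
  subI E (sat M (addI E' (span a i))).
Proof.
move=> hM hMx hE hE' hai h1 h2.
have hK : is_ideal (addI E' (span a i)) := addI_ideal hE' (span_ideal a i).
have [hMi hM1 hMpr] := hM.
have [u [hu [e [t [he [[s [hs ->]] eu]]]]]] := h2 _ hai.
have [v [hv [e2 [t2 [he2 [[c ->] ev]]]]]] := h1 _ hs.
rewrite big_ord_recr /= in ev.
set S := \sum_(l < i) c l * a l in ev.
have key : addI E' (span a i) ((u * v - x * c i) * a i).
  exists (v * e + x * e2), (x * S); split.
    by apply: idD => //; apply: idM.
  split; first by exists (fun l => x * c l); rewrite /S mulr_sumr; apply: eq_bigr => l _; rewrite mulrA.
  have -> : (u * v - x * c i) * a i = v * (u * a i) - x * (c i * a i) by ring.
  rewrite eu.
  have -> : v * (e + x * s) = v * e + x * (v * s) by ring.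
  rewrite ev; ring.
have hz : ~ M (u * v - x * c i).
  move=> hm; have e0 : u * v = (u * v - x * c i) + c i * x by ring.
  have : M (u * v) by rewrite e0; apply: idD => //; apply: idM.
  by move/hMpr => [].
move=> r /h1 [w [hw [e3 [t3 [he3 [[d ->] ew]]]]]].
exists ((u * v - x * c i) * w); split; first exact: prime_nM.
rewrite big_ord_recr /= in ew.
set S' := \sum_(l < i) d l * a l in ew.
have -> : (u * v - x * c i) * w * r =
   (u * v - x * c i) * (e3 + S') + d i * ((u * v - x * c i) * a i).
  by rewrite -mulrA ew; ring.
apply: idD => //; apply: idM => //.
by exists e3, S'; split => //; split => //; exists d.
Qed.

Lemma nakayama (R : comNzRingType) (M E E' : R -> Prop) x n (a : nat -> R) :
  is_prime_ideal M -> M x -> is_ideal E -> is_ideal E' -> (forall i, (i < n)%N -> E (a i)) ->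
  subI E (span a n) -> subI E (sat M (addI E' (xmul x E))) -> subI E (sat M E').
Proof.
move=> hM hMx hE hE' ha hsp hx.
have h : forall k i, (i + k = n)%N -> subI E (sat M (addI E' (span a i))).
  elim=> [|k IH] i hik.
    rewrite addn0 in hik; subst i => r hr; apply: sat_incl => //.
    by exists 0, r; split; [exact: id0 | split; [exact: hsp | rewrite add0r]].
  apply: (naka_step hM hMx hE hE') => //.
    by apply: ha; rewrite -hik -addSnnS leq_addr.
  by apply: IH; rewrite addSnnS.
move=> r /(h n 0%N (add0n n)) [u [hu [e [t [he [[c ->] e']]]]]].
by exists u; split => //; rewrite e' big_ord0 addr0.
Qed.

Lemma pit (R : idomainType) (M P : R -> Prop) x p : noetherian R -> minimal_over M x ->
  is_prime_ideal P -> subI P M -> (exists r, M r /\ ~ P r) -> P p -> p != 0 -> False.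
Proof.
move=> hN hmin hP hPM [r0 [hMr0 hPr0]] hPp hp0.
have [hM [hMx hminG]] := hmin.
have hxP : ~ P x by move=> hPx; apply: hPr0; apply: (hminG P hP hPx hPM).
have hP1 : ~ P 1 by case: hP.
pose E n := fun r => exists v c, ~ P v /\ v * r = c * p ^+ n.
have hEi n : is_ideal (E n).
  split.
  - by exists 1, 0; split => //; rewrite mulr0 mul0r.
  - move=> r1 r2 [v1 [c1 [h1 e1]]] [v2 [c2 [h2 e2]]]; exists (v1 * v2), (v2 * c1 + v1 * c2).
    split; first exact: prime_nM.
    have -> : v1 * v2 * (r1 + r2) = v2 * (v1 * r1) + v1 * (v2 * r2) by ring.
    by rewrite e1 e2; ring.
  - move=> t r1 [v1 [c1 [h1 e1]]]; exists v1, (t * c1); split => //.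
    have -> : v1 * (t * r1) = t * (v1 * r1) by ring.
    by rewrite e1; ring.
have hEsP n : satd P (E n).
  move=> u r hu [v [c [hv e]]]; exists (v * u), c; split; first exact: prime_nM.
  by rewrite -mulrA.
have hEd n : subI (E n.+1) (E n).
  by move=> r [v [c [hv e]]]; exists v, (c * p); split => //; rewrite e exprSr; ring.
pose G n := sat M (addx (E n) x).
pose J := sat M (addx (@zeroI R) x).
have hch : chain_over M J G.
  split.
  - by move=> n; apply: sat_ideal => //; apply: addx_ideal.
  - by move=> n; apply: sat_satd.
  - move=> n r [u [hu [e [c [he ee]]]]]; exists u; split => //; exists e, c; split => //.
    exact: hEd.
  - move=> n r [u [hu [z [c [hz ee]]]]]; exists u; split => //; exists z, c; split => //.
    by rewrite hz; exact: id0.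
have hJx : J x.
  exists 1; split; first by case: hM.
  by exists 0, 1; split => //; rewrite add0r.
have [N _ hGN] := dcc hN hmin (sat_ideal hM (addx_ideal x (@zeroI_ideal R)))
                        (sat_satd (I := addx (@zeroI R) x) hM) hJx hch 0.
have hB : subI (E N) (sat M (addI (E N.+1) (xmul x (E N)))).
  move=> r hr.
  have : G N r.
    exists 1; split; first by case: hM.
    by exists r, 0; split => //; rewrite mul1r mul0r addr0.
  move=> /hGN [u [hu [e [c [he ee]]]]].
  have hc : E N c.
    apply: (hEsP N x c hxP); rewrite mulrC.
    have -> : c * x = u * r - e by rewrite ee; ring.
    by apply: idB => //; [apply: idM | apply: hEd].
  exists u; split => //; exists e, (x * c); split => //; split; first by exists c.
  by rewrite ee mulrC.
have [m [a [ha hsp]]] := fg hN (hEi N).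
have hC := nakayama hM hMx (hEi N) (hEi N.+1) ha hsp hB.
have hpN : E N (p ^+ N) by exists 1, 1; split => //; rewrite !mul1r.
have [w [hw [v [c [hv e]]]]] := hC _ hpN.
have : (v * w - c * p) * p ^+ N = 0.
  by rewrite mulrBl -mulrA e exprSr; ring.
move/eqP; rewrite mulf_eq0 expf_eq0 (negbTE hp0) andbF orbF subr_eq0 => /eqP evw.
have : P (v * w) by rewrite evw; apply: idM => //; case: hP.
case: hP => _ _ hpr /hpr [//|hPw].
by apply: hw; apply: hPM.
Qed.

Lemma min_select (R : Type) (G : R -> Prop) (C : nat -> R -> Prop) n :
  (exists2 i, (i < n)%N & subI (C i) G) ->
  exists i, [/\ (i < n)%N, subI (C i) G &
                forall j, (j < n)%N -> subI (C j) (C i) -> subI (C i) (C j)].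
Proof.
elim: n => [[i]//|n IH].
case: (classic (exists2 i, (i < n)%N & subI (C i) G)) => [hex _|hno [i hi hiG]].
  have [i0 [hi0 hi0G hmin]] := IH hex.
  case: (classic (subI (C n) (C i0) /\ ~ subI (C i0) (C n))) => [[h1 h2]|hno].
    exists n; split => //; first by move=> r /h1 /hi0G.
    move=> j hj hjn; move: hj; rewrite ltnS leq_eqVlt => /orP [/eqP hjE|hj]; first by subst j.
    exfalso; apply: h2.
    move=> r /(hmin j hj (fun r h => h1 r (hjn r h))); exact: hjn.
  exists i0; split => //; first exact: ltnW.
  move=> j; rewrite ltnS leq_eqVlt => /orP [/eqP hjE|hj]; last exact: hmin.
  subst j.
  move=> h; apply: NNPP => h'; apply: hno; split => //.
have hin : i = n.
  apply/eqP; move: hi; rewrite ltnS leq_eqVlt => /orP [//|hlt].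
  by exfalso; apply: hno; exists i.
subst i; exists n; split => // j; rewrite ltnS leq_eqVlt => /orP [/eqP hjE|hj] hjn.
  by subst j.
by exfalso; apply: hno; exists j => // r /hjn /hiG.
Qed.

Definition prinI (R : comNzRingType) (x : R) := fun r => exists c, r = c * x.

Lemma prinI_ideal (R : comNzRingType) (x : R) : is_ideal (prinI x).
Proof.
split.
- by exists 0; rewrite mul0r.
- by move=> a b [c1 ->] [c2 ->]; exists (c1 + c2); rewrite mulrDl.
- by move=> r a [c ->]; exists (r * c); rewrite mulrA.
Qed.

Lemma min_prime_over (R : comNzRingType) (G : R -> Prop) x :
  noetherian R -> is_prime_ideal G -> G x ->
  exists M, minimal_over M x /\ subI M G.
Proof.
move=> hN hG hGx.
have hGp : subI (prinI x) G by move=> r [c ->]; apply: idM => //; case: hG.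
have [n [C [hC hP]]] := L1 hN (prinI_ideal x).
have [i [hi hiG hmin]] := min_select (L1_cover hP hG hGp).
exists (C i); split => //; split; first exact: (hC i hi).1.
split; first by apply: (hC i hi).2; exists 1; rewrite mul1r.
move=> H hH hHx hHC.
have hHp : subI (prinI x) H by move=> r [c ->]; apply: idM => //; case: hH.
have [j hj hjH] := L1_cover hP hH hHp.
move=> r /(hmin j hj (fun r h => hHC r (hjH r h))); exact: hjH.
Qed.

Lemma avoid (R : comNzRingType) (I : R -> Prop) n (G : nat -> R -> Prop) :
  is_ideal I -> (forall i, (i < n)%N -> is_prime_ideal (G i)) ->
  (forall i, (i < n)%N -> exists r, I r /\ ~ G i r) ->
  exists r, I r /\ forall i, (i < n)%N -> ~ G i r.
Proof.
move=> hI; elim: n => [|n IH] hG hex.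
  by exists 0; split => //; exact: id0.
have [a [ha hav]] := IH (fun i hi => hG i (ltnW hi)) (fun i hi => hex i (ltnW hi)).
case: (classic (G n a)) => [hGa|hGa]; last first.
  exists a; split => // i; rewrite ltnS leq_eqVlt => /orP [/eqP -> //|]; exact: hav.
have [b [hb hGb]] := hex n (ltnSn n).
have [hGni hGn1 hGnp] := hG n (ltnSn n).
have hg i : exists g, G i g /\ ~ G n g \/ (subI (G i) (G n) /\ g = 1).
  case: (classic (subI (G i) (G n))) => h; first by exists 1; right.
  have [r hr] := not_all_ex_not _ _ h; have [h1 h2] := imply_to_and _ _ hr.
  by exists r; left.
pose g i := sval (constructive_indefinite_description _ (hg i)).
have hgi i : G i (g i) /\ ~ G n (g i) \/ (subI (G i) (G n) /\ g i = 1).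
  exact: (svalP (constructive_indefinite_description _ (hg i))).
have hgn i : ~ G n (g i) by case: (hgi i) => [[]|[_ ->]].
have hbc : ~ G n (b * \prod_(i < n) g i).
  move=> /hGnp [//|] /(prime_prod (hG n (ltnSn n))) [i _]; exact: hgn.
exists (a + b * \prod_(i < n) g i); split.
  by apply: idD => //; apply: idMr.
move=> i; rewrite ltnS leq_eqVlt => /orP [/eqP ->|hi].
  move=> h; apply: hbc; have -> : b * \prod_(i < n) g i = (a + b * \prod_(i < n) g i) - a by ring.
  exact: idB.
have [hGii _ _] := hG i (ltnW hi).
case: (hgi i) => [[hgG _]|[hsub _]].
  move=> h; apply: (hav i hi).
  have -> : a = (a + b * \prod_(i < n) g i) - b * \prod_(i < n) g i by ring.
  apply: idB => //; apply: idM => //.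
  by rewrite (bigD1 (Ordinal hi)) //=; apply: idMr.
move=> /hsub h; apply: hbc.
have -> : b * \prod_(i < n) g i = (a + b * \prod_(i < n) g i) - a by ring.
exact: idB.
Qed.

Lemma exists_max_over (R : comUnitRingType) (z : R) :
  noetherian R -> ~ (z \is a GRing.unit) ->
  exists M, is_prime_ideal M /\ M z.
Proof.
move=> hN hz.
have hne : exists M, is_ideal M /\ M z /\ ~ M 1.
  exists (prinI z); split; first exact: prinI_ideal.
  split; first by exists 1; rewrite mul1r.
  move=> [c hc]; apply: hz; apply/unitrP; exists c; split; first by rewrite -hc.
  by rewrite mulrC -hc.
have [M [[hMi [hMz hM1]] hmax]] := max_principle
  (S := fun M => is_ideal M /\ M z /\ ~ M 1) hN (fun M h => h.1) hne.
exists M; split => //; split => // a b hab.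
case: (classic (M a)) => [|ha]; [by left|right].
have h1 : addx M a 1.
  apply: NNPP => hn.
  have hsub : subI M (addx M a) by move=> r hr; exists r, 0; split => //; rewrite mul0r addr0.
  apply: ha; apply: (hmax _ _ hsub).
    split; first exact: addx_ideal.
    by split => //; apply: hsub.
  by exists 0, 1; split; [exact: id0 | rewrite add0r mul1r].
have [m [c [hm e]]] := h1.
have -> : b = b * m + c * (a * b) by rewrite -{1}[b]mulr1 e; ring.
by apply: idD => //; apply: idM.
Qed.

Lemma divisor (R : idomainType) (A : R -> Prop) : (forall x, A x -> x != 0) ->
  localization_is_fraction_field A ->
  forall x : R, x != 0 -> exists s b, A s /\ s = b * x.
Proof.
move=> hA0 hloc x hx.
have [a [s [hs e]]] := hloc (FracField.tofrac x)^-1.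
exists s, a; split => //.
apply/eqP; rewrite -tofrac_eq tofracM; apply/eqP.
have hxF : FracField.tofrac x != 0 by rewrite tofrac_eq0.
have hsF : FracField.tofrac s != 0 by rewrite tofrac_eq0 hA0.
rewrite -[LHS]mul1r -(mulVf hxF) e.
by field.
Qed.

Lemma pigeon (T : eqType) (t0 : T) (Pn : nat -> T -> Prop) :
  uncountable T -> (forall l, exists n, Pn n l) ->
  exists n, forall s : seq T, exists l, Pn n l /\ l \notin s.
Proof.
move=> hu hall; apply: NNPP => hno.
have hL n : exists s : seq T, forall l, Pn n l -> l \in s.
  apply: NNPP => h; apply: hno; exists n => s; apply: NNPP => h2; apply: h; exists s.
  move=> l hl; apply: NNPP => hls; apply: h2; exists l; split => //; exact/negP.
pose L n := sval (constructive_indefinite_description _ (hL n)).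
have hLn n : forall l, Pn n l -> l \in L n.
  exact: (svalP (constructive_indefinite_description _ (hL n))).
apply: hu.
exists (fun m => match (unpickle m : option (nat * nat)) with
                 | Some (n, i) => nth t0 (L n) i | None => t0 end).
move=> l; have [n hn] := hall l.
exists (pickle (n, index l (L n))); rewrite pickleK.
by apply: nth_index; apply: hLn.
Qed.

Lemma inj_seq (T : eqType) (Pp : T -> Prop) :
  (forall s : seq T, exists l, Pp l /\ l \notin s) ->
  exists lam : nat -> T, (forall j, Pp (lam j)) /\ (forall i j, (i < j)%N -> lam i != lam j).
Proof.
move=> h.
pose hh s := sval (constructive_indefinite_description _ (h s)).
have hhP s : Pp (hh s) /\ hh s \notin s.
  exact: (svalP (constructive_indefinite_description _ (h s))).
pose S := fix S n := if n is n'.+1 then hh (S n') :: S n' else [::].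
exists (fun j => hh (S j)); split => [j|]; first exact: (hhP _).1.
have hin i j : (i < j)%N -> hh (S i) \in S j.
  elim: j => [//|j IH]; rewrite ltnS leq_eqVlt => /orP [/eqP ->|/IH hi].
    by rewrite /= in_cons eqxx.
  by rewrite /= in_cons hi orbT.
move=> i j hij; apply/eqP => e.
have := (hhP (S j)).2; rewrite -e; by rewrite hin.
Qed.

Lemma prod_shift (R : comNzRingType) (y : R) (a : nat -> R) n :
  exists t, \prod_(i < n) (y + a i) = \prod_(i < n) a i + y * t.
Proof.
elim: n => [|n [t IH]]; first by exists 0; rewrite !big_ord0 mulr0 addr0.
exists (t * (y + a n) + \prod_(i < n) a i); rewrite !big_ord_recr /= IH; ring.
Qed.

Lemma div_trick (R : idomainType) (s : R) (x b : nat -> R) :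
  noetherian R -> s != 0 -> (forall j, s = b j * x j) ->
  exists N t, \prod_(i < N.+1) x i = t * x N.+1.
Proof.
move=> hN hs hb.
have hmono : forall n r, span b n.+1 r -> span b n.+2 r.
  move=> n r [c ->]; exists (fun i => if (i < n.+1)%N then c i else 0).
  rewrite [in RHS]big_ord_recr /= ltnn mul0r addr0.
  by apply: eq_bigr => i _; rewrite ltn_ord.
have [N hNc] := hN (fun n => span b n.+1) (fun n => span_ideal b n.+1) hmono.
have [d hd] := hNc N.+1 (leqnSn N) (b N.+1) (span_mem b (ltnSn N.+1)).
exists N, (\sum_(i < N.+1) d i * \prod_(l < N.+1 | l != i) x l).
apply: (mulfI hs).
rewrite {1}(hb N.+1) -mulrA [b N.+1 * _]mulrC -mulrA hd.
rewrite mulr_sumr mulr_suml !mulr_sumr; apply: eq_bigr => i _.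
rewrite (bigD1 i) //= (hb i); ring.
Qed.

Lemma no_two (k : fieldType) (R : idomainType) (phi : {rmorphism k -> R})
  (hk : uncountable k) (hN : noetherian R)
  (A : R -> Prop) (hA0 : forall x, A x -> x != 0)
  (hAc : countable_subset A) (hloc : localization_is_fraction_field A)
  (P Q : R -> Prop) : is_prime_ideal P -> is_prime_ideal Q -> subI P Q ->
  (exists r, Q r /\ ~ P r) -> (exists p, P p /\ p != 0) -> False.
Proof.
move=> hP hQ hPQ [r0 [hQr0 hPr0]] [p [hPp hp0]].
have [hQi hQ1 hQp] := hQ.
have [hPi hP1 hPpr] := hP.
have [n [C [hC hPc]]] := L1 hN (prinI_ideal p).
pose F j := if j is j'.+1 then
   (if excluded_middle_informative (subI Q (C j')) then P else C j') else P.
have hFp : forall i, (i < n.+1)%N -> is_prime_ideal (F i).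
  case=> [|i] //= hi; case: excluded_middle_informative => hh //.
  exact: (hC i hi).1.
have hFe : forall i, (i < n.+1)%N -> exists r, Q r /\ ~ F i r.
  case=> [|i] /= hi; first by exists r0.
  case: excluded_middle_informative => h; first by exists r0.
  have [r hr] := not_all_ex_not _ _ h; have [h1 h2] := imply_to_and _ _ hr.
  by exists r.
have [q [hQq hqF]] := avoid hQi hFp hFe.
have hqP : ~ P q := hqF 0%N erefl.
have hqC i : (i < n)%N -> ~ subI Q (C i) -> ~ C i q.
  move=> hi hn; have := hqF i.+1 hi; rewrite /F.
  by case: excluded_middle_informative.
pose xl l := q + phi l * p.
have hxl0 l : xl l != 0.
  apply/eqP => e; apply: hqP.
  have -> : q = - (phi l * p) by apply/eqP; rewrite -subr_eq0 opprK; apply/eqP.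
  by apply: idN => //; apply: idM.
have [f hf] := hAc.
have hall : forall l, exists m, A (f m) /\ exists b, f m = b * xl l.
  move=> l; have [s [b [hs e]]] := divisor hA0 hloc (hxl0 l).
  have [m hm] := hf s hs; exists m; rewrite hm; split => //; by exists b.
have [m0 hm0] := pigeon 0 hk hall.
have [lam [hlam hinj]] := inj_seq hm0.
have hs : f m0 != 0 := hA0 _ (hlam 0%N).1.
pose b j := sval (constructive_indefinite_description _ (hlam j).2).
have hb j : f m0 = b j * xl (lam j).
  exact: (svalP (constructive_indefinite_description _ (hlam j).2)).
have [N [t ht]] := div_trick (x := fun j => xl (lam j)) hN hs hb.
set m := N.+1 in ht.
have [t' ht'] := prod_shift (xl (lam m)) (fun i => (phi (lam i) - phi (lam m)) * p) m.
have e1 : \prod_(i < m) xl (lam i) =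
          \prod_(i < m) (xl (lam m) + (phi (lam i) - phi (lam m)) * p).
  by apply: eq_bigr => i _; rewrite /xl; ring.
pose c := \prod_(i < m) (lam i - lam m).
have hc : c != 0.
  apply/prodf_neq0 => i _; rewrite subr_eq0; apply: hinj; exact: ltn_ord.
have e2 : \prod_(i < m) ((phi (lam i) - phi (lam m)) * p) = phi c * p ^+ m.
  rewrite big_split /= prodr_const card_ord rmorph_prod; congr (_ * _).
  by apply: eq_bigr => i _; rewrite rmorphB.
have hpm : prinI (xl (lam m)) (p ^+ m).
  exists (phi c^-1 * (t - t')).
  have -> : p ^+ m = phi c^-1 * (phi c * p ^+ m).
    by rewrite mulrA -rmorphM mulVf // rmorph1 mul1r.
  have e3 : \prod_(i < m) ((phi (lam i) - phi (lam m)) * p) =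
            \prod_(i < m) xl (lam i) - xl (lam m) * t' by rewrite e1 ht'; ring.
  by rewrite -e2 e3 ht; ring.
have hQx : Q (xl (lam m)) by apply: idD => //; apply: idM => //; apply: hPQ.
have [M [hmin hMQ]] := min_prime_over hN hQ hQx.
have [hM [hMx _]] := hmin.
have [hMi hM1 hMp] := hM.
have hMp' : M p.
  apply: (prime_pow (n := m) hM); case: hpm => d ->; exact: idM.
have hMq : M q.
  have -> : q = xl (lam m) - phi (lam m) * p by rewrite /xl; ring.
  by apply: idB => //; apply: idM.
have hpM : subI (prinI p) M by move=> r [d ->]; exact: idM.
have [i hi hiM] := L1_cover hPc hM hpM.
have hCp : C i p by apply: (hC i hi).2; exists 1; rewrite mul1r.
case: (classic (subI Q (C i))) => hQC.
  apply: (pit hN hmin hP) hPp hp0.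
    by move=> r /hPQ /hQC /hiM.
  by exists r0; split => //; apply: hiM; apply: hQC.
apply: (pit hN hmin (hC i hi).1 hiM _ hCp hp0).
by exists q; split => //; apply: hqC.
Qed.

Lemma zeroI_prime (R : idomainType) : is_prime_ideal (@zeroI R).
Proof.
split; first exact: zeroI_ideal.
  by rewrite /zeroI; apply/eqP; exact: oner_neq0.
by rewrite /zeroI => x y /eqP; rewrite mulf_eq0 => /orP [/eqP|/eqP]; [left|right].
Qed.

Unset Implicit Arguments.

Theorem lemma5p2 (k : fieldType) (R : idomainType) (phi : {rmorphism k -> R})
  (hk : uncountable k) (hnoeth : noetherian R) (hnf : ~ is_field_ring R)
  (A : R -> Prop) (hA0 : forall x, A x -> x != 0) (hAm : mult_closed A)
  (hAc : countable_subset A) (hloc : localization_is_fraction_field A) :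
  krull_dim_eq R 1 /\ spec_countable R.
Proof.
have NT := no_two phi hk hnoeth hA0 hAc hloc.
split.
  split.
    have [z hz] := not_all_ex_not _ _ hnf.
    have [hz0 hzu] := imply_to_and _ _ hz.
    have [M [hM hMz]] := exists_max_over hnoeth (fun h => hzu h).
    exists (fun i => if i == 0%N then @zeroI R else M); split.
      by case=> [|[|i]] //= _; exact: zeroI_prime.
    case=> [|i] // _ /=; split.
      by move=> r ->; apply: id0; case: hM.
    by exists z; split => //; rewrite /zeroI; apply/eqP.
  move=> m c [hcp hcs]; rewrite leqNgt; apply/negP => hm.
  have h01 := hcs 0%N (ltn_trans (ltnSn 0) hm).
  have h12 := hcs 1%N hm.
  have [y [hy1 hy0]] := h01.2.
  apply: (NT (c 1%N) (c 2%N)).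
  - by apply: hcp; exact: ltnW.
  - exact: hcp.
  - exact: h12.1.
  - exact: h12.2.
  - exists y; split => //; apply/eqP => e; apply: hy0; rewrite e.
    by apply: id0; case: (hcp 0%N isT).
have [f hf] := hAc.
have hL n : exists l (C : nat -> R -> Prop), (forall i, (i < l)%N -> is_prime_ideal (C i) /\
    subI (prinI (f n)) (C i)) /\ (forall a : nat -> R, (forall i, (i < l)%N -> C i (a i)) ->
    prinI (f n) (\prod_(i < l) a i)).
  exact: L1 hnoeth (prinI_ideal (f n)).
pose l n := sval (constructive_indefinite_description _ (hL n)).
have hl n := svalP (constructive_indefinite_description _ (hL n)).
pose C n := sval (constructive_indefinite_description _ (hl n)).
have hC n := svalP (constructive_indefinite_description _ (hl n)).
exists (fun m => if m is m'.+1 then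
          (match (unpickle m' : option (nat * nat)) with
           | Some (n, i) => C n i | None => @zeroI R end)
        else @zeroI R).
move=> P hP.
have [hPi hP1 hPp] := hP.
case: (classic (exists y, P y /\ y != 0)) => [[y [hPy hy0]]|hno]; last first.
  exists 0%N => x /=; split.
    move=> hx; apply/eqP; apply: NNPP => h; apply: hno; exists x; split => //; exact/negP.
  by move=> ->; apply: id0.
have [s [b [hs e]]] := divisor hA0 hloc hy0.
have [n hn] := hf s hs.
have hPs : P (f n) by rewrite hn e; apply: idM.
have hsP : subI (prinI (f n)) P by move=> r [d ->]; apply: idM.
have [hCi hCP] := (hC n).
have [i hi hiP] := L1_cover hCP hP hsP.
exists (pickle (n, i)).+1 => x /=; rewrite pickleK; split; last exact: hiP.
move=> hx; apply: NNPP => hnx.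
apply: (NT (C n i) P (hCi i hi).1 hP hiP); first by exists x.
exists (f n); split; first by apply: (hCi i hi).2; exists 1; rewrite mul1r.
by rewrite hn; apply: hA0.
Qed.
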